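(* Let $C\ge 0$, let $D_1,\dots,D_n\subseteq\mathbb{Z}$ each be a nonempty finite set of consecutive integers, let $D^n=D_1\times\cdots\times D_n$, and let $(D^n,f)$ be an Ameso($C$) pair. Let $1\le j\le n$ and let $i_1,\dots,i_j\in\{1,\dots,n\}$ be distinct. Define $\Delta^j_{i_1,\dots,i_j}=D_{i_1}\times\cdots\times D_{i_j}$ and, for $(x_{i_1},\dots,x_{i_j})\in\Delta^j_{i_1,\dots,i_j}$, the conditional function $f^*_{i_1,\dots,i_j}(x_{i_1},\dots,x_{i_j})=\min\{f(\vec y):\vec y=(y_1,\dots,y_n)\in D^n,\ y_{i_k}=x_{i_k}\ \text{for } k=1,\dots,j\}$. Then $(\Delta^j_{i_1,\dots,i_j},f^*_{i_1,\dots,i_j})$ is a $j$-dimensional Ameso($C$) pair.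
   Context: Floors and ceilings of vectors are taken componentwise. A set $D^n\subseteq\mathbb{Z}^n$ is an Ameso set if $\lceil(\vec x+\vec y)/2\rceil,\lfloor(\vec x+\vec y)/2\rfloor\in D^n$ for all $\vec x,\vec y\in D^n$. For $C\ge 0$, $(D^n,f)$ is an Ameso($C$) pair if $D^n$ is an Ameso set, $f:D^n\to\mathbb{R}$ is bounded below, and $f(\vec x)+f(\vec y)+C\ge f(\lceil(\vec x+\vec y)/2\rceil)+f(\lfloor(\vec x+\vec y)/2\rfloor)$ for all $\vec x,\vec y\in D^n$. *)

(* Defs.v *)
From mathcomp Require Import all_boot all_order all_algebra.
From mathcomp Require Import boolp classical_sets reals.
Set Implicit Arguments. Unset Strict Implicit. Unset Printing Implicit Defensive.
Import Order.TTheory GRing.Theory Num.Theory.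
Local Open Scope classical_set_scope.
Local Open Scope ring_scope.

(* floor(z/2) and ceil(z/2) for an integer z (intdiv's %/ floors for d>0). *)
Definition half_floor (z : int) : int := divz z 2.
Definition half_ceil (z : int) : int := - divz (- z) 2.

Definition vfloor_mid (n : nat) (x y : 'I_n -> int) : 'I_n -> int :=
  fun k => half_floor (x k + y k).
Definition vceil_mid (n : nat) (x y : 'I_n -> int) : 'I_n -> int :=
  fun k => half_ceil (x k + y k).

Definition is_Ameso_set (n : nat) (D : set ('I_n -> int)) : Prop :=
  forall x y, D x -> D y -> D (vceil_mid x y) /\ D (vfloor_mid x y).

(* (D, f) is an Ameso(C) pair; f is only relevant on D. *)
Definition is_Ameso_pair (R : realType) (C : R) (n : nat)
    (D : set ('I_n -> int)) (f : ('I_n -> int) -> R) : Prop :=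
  [/\ is_Ameso_set D,
      (exists m : R, forall x, D x -> m <= f x) &
      forall x y, D x -> D y ->
        f (vceil_mid x y) + f (vfloor_mid x y) <= f x + f y + C].

Definition box (n : nat) (a b : 'I_n -> int) : set ('I_n -> int) :=
  [set x | forall k, a k <= x k <= b k].

Definition condf (R : realType) (n j : nat) (a b : 'I_n -> int)
    (f : ('I_n -> int) -> R) (i : 'I_j -> 'I_n) (x : 'I_j -> int) : R :=
  inf [set f y | y in [set y | box a b y /\ forall k, y (i k) = x k]].

(* Main.v *)
Require Import Defs.
From mathcomp Require Import all_boot all_order all_algebra.
From mathcomp Require Import boolp classical_sets reals.
From mathcomp Require Import zify lra.
Import Order.TTheory GRing.Theory Num.Theory.
Local Open Scope classical_set_scope.
Local Open Scope ring_scope.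

Lemma hf_box {lo hi u v : int} : lo <= u <= hi -> lo <= v <= hi ->
  lo <= half_floor (u+v) <= hi /\ lo <= half_ceil (u+v) <= hi.
Proof. rewrite /half_floor /half_ceil. lia. Qed.

Lemma box_ameso {n : nat} {a b : 'I_n -> int} : is_Ameso_set (box a b).
Proof.
move=> x y Hx Hy; split => k; rewrite /vceil_mid /vfloor_mid;
  have [H1 H2] := hf_box (Hx k) (Hy k); by [].
Qed.

Theorem mainTheorem10 (R : realType) (C : R) (n : nat) (a b : 'I_n -> int)
    (f : ('I_n -> int) -> R) (j : nat) (i : 'I_j -> 'I_n) :
  0 <= C ->
  (forall k, a k <= b k) ->
  is_Ameso_pair C (box a b) f ->
  (0 < j)%N ->
  injective i ->
  is_Ameso_pair C (box (a \o i) (b \o i)) (condf a b f i).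
Proof.
move=> C0 ab [_ [m Hm] Hf] j0 inj.
pose S (x : 'I_j -> int) := [set f y | y in [set y | box a b y /\ forall k, y (i k) = x k]].
have ne : forall x, box (a \o i) (b \o i) x -> S x !=set0.
  move=> x Hx.
  pose y := fun k => match [pick k' | i k' == k] with Some k' => x k' | None => a k end.
  exists (f y); exists y => //; split.
  - move=> k; rewrite /y; case: pickP => [k' /eqP <-|_]; first exact: Hx.
    by rewrite lexx ab.
  - move=> k; rewrite /y; case: pickP => [k' /eqP /inj -> //|/(_ k)].
    by rewrite eqxx.
have lb : forall x, lbound (S x) m.
  by move=> x _ [y [Hy _] <-]; apply: Hm.
have hl : forall x, has_lbound (S x) by move=> x; exists m; apply: lb.
split.
- exact: box_ameso.
- exists m => x Hx; apply: lb_le_inf; [exact: ne | exact: lb].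
- move=> x x' Hx Hx'.
  rewrite /condf -/(S x) -/(S x') -/(S (vceil_mid x x')) -/(S (vfloor_mid x x')).
  have key : forall y y', box a b y -> box a b y' ->
      (forall k, y (i k) = x k) -> (forall k, y' (i k) = x' k) ->
      inf (S (vceil_mid x x')) + inf (S (vfloor_mid x x')) <= f y + f y' + C.
    move=> y y' Hy Hy' ey ey'.
    have [Hc Hfl] := box_ameso _ _ Hy Hy'.
    apply: le_trans (Hf _ _ Hy Hy').
    apply: lerD; apply: ge_inf => //.
      exists (vceil_mid y y') => //; split => // k; by rewrite /vceil_mid ey ey'.
    exists (vfloor_mid y y') => //; split => // k; by rewrite /vfloor_mid ey ey'.
  have step1 : forall y', box a b y' -> (forall k, y' (i k) = x' k) ->
      inf (S (vceil_mid x x')) + inf (S (vfloor_mid x x')) - f y' - C <= inf (S x).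
    move=> y' Hy' ey'; apply: lb_le_inf; first exact: ne.
    move=> _ [y [Hy ey] <-].
    have := key _ _ Hy Hy' ey ey'. lra.
  have : inf (S (vceil_mid x x')) + inf (S (vfloor_mid x x')) - inf (S x) - C <= inf (S x').
    apply: lb_le_inf; first exact: ne.
    move=> _ [y' [Hy' ey'] <-].
    have := step1 _ Hy' ey'. lra.
  lra.
Qed.
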